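(* Let $P$ be a finite $(3+1)$-free poset and let $\mathsf a=a_{n+1}a_n\cdots a_1$ and $\mathsf b=b_nb_{n-1}\cdots b_1$ be $P$-strictly decreasing words such that (i) $a_i\sim_Pb_i$ for all $i\in[n]$; (ii) $a_{i+1}\sim_Pb_i$ for all $i\in[n]$; (iii) $a_i<_Pb_{i+1}$ for all $i\in[n-1]$; (iv) $b_i<_Pa_{i+2}$ for all $i\in[n-1]$. Then $\mathbf{u}_{\mathsf a}\mathbf{u}_{\mathsf b}\equiv\mathbf{u}_{\mathsf b}\mathbf{u}_{\mathsf a}\pmod{I^P_{\mathrm{plac}}}$.
   Context: $a<_Pb$: strict order; $a\sim_Pb$: incomparable or equal. A word $w_1\cdots w_m$ is $P$-strictly decreasing if $w_1>_P\cdots>_Pw_m$. $\mathcal{U}_P=\mathbb{Z}\langle u_a:a\in P\rangle$, $\mathbf{u}_w=u_{w_1}\cdots u_{w_m}$. $I^P_{\mathrm{plac}}$ is the two-sided ideal generated by: $u_bu_au_c-u_bu_cu_a$ when $a<_Pb$, $c\not<_Pb$, $a<_Pc$; $u_cu_au_b-u_au_cu_b$ when $b\not<_Pa$, $b<_Pc$, $a<_Pc$; $u_cu_au_b-u_bu_cu_a$ when $a\sim_Pb$, $b\sim_Pc$, $a<_Pc$. *)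

(* Defs.v *)
From HB Require Import structures.
From mathcomp Require Import all_boot all_order all_algebra.
Set Implicit Arguments. Unset Strict Implicit. Unset Printing Implicit Defensive.
Import Order.TTheory GRing.Theory Num.Theory.
Local Open Scope order_scope.

Section Plactic.
Context {disp : Order.disp_t} {P : finPOrderType disp}.

Definition simP (x y : P) : bool := ~~ (x < y) && ~~ (y < x).

Definition three_one_free : Prop :=
  ~ exists x y z w : P, [/\ x < y, y < z, simP w x, simP w y & simP w z].

(* Words are sequences of letters; the monomial u_w is identified with w.
   Elements of Z<u_a : a in P> are represented by their coefficient
   functions  seq P -> int. *)

(* the three families of generators u_l - u_r of I^P_plac *)
Definition plac_gen (l r : seq P) : Prop :=
  exists a b c : P,
    [/\ a < b, ~~ (c < b), a < c, l = [:: b; a; c] & r = [:: b; c; a]]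
 \/ [/\ ~~ (b < a), b < c, a < c, l = [:: c; a; b] & r = [:: a; c; b]]
 \/ [/\ simP a b, simP b c, a < c, l = [:: c; a; b] & r = [:: b; c; a]].

Definition mono (v : seq P) : seq P -> int := fun w => Posz (nat_of_bool (w == v)).

(* f lies in the two-sided ideal generated by the plac_gen differences:
   f is a finite Z-linear combination of terms u_x (u_l - u_r) u_y. *)
Definition in_Iplac (f : seq P -> int) : Prop :=
  exists s : seq (int * seq P * seq P * seq P * seq P),
    (forall t, t \in s -> plac_gen t.1.1.2 t.1.2) /\
    forall w, f w = (\sum_(t <- s)
        t.1.1.1.1 * (mono (t.1.1.1.2 ++ t.1.1.2 ++ t.2) w
                     - mono (t.1.1.1.2 ++ t.1.2 ++ t.2) w))%R.

Definition plac_equiv (f g : seq P -> int) : Prop :=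
  in_Iplac (fun w => (f w - g w)%R).

Definition word_dec (w : nat -> P) (m : nat) : seq P :=
  [seq w i | i <- rev (iota 1 m)].

End Plactic.

(* Main.v *)
Require Import Defs.
From mathcomp Require Import all_boot all_order all_algebra.
From mathcomp Require Import zify.
Import Order.TTheory GRing.Theory Num.Theory.
Local Open Scope order_scope.

Definition eqv {disp : Order.disp_t} {P : finPOrderType disp} (u v : seq P) :=
  plac_equiv (mono u) (mono v).

Lemma eqv_refl disp (P : finPOrderType disp) (u : seq P) : eqv u u.
Proof. exists [::]; split => // w; by rewrite big_nil GRing.subrr. Qed.

Lemma eqv_sym disp (P : finPOrderType disp) (u v : seq P) : eqv u v -> eqv v u.
Proof.
case=> s [Hg Hs].
exists (map (fun t : int * seq P * seq P * seq P * seq P =>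
   ((- t.1.1.1.1)%R, t.1.1.1.2, t.1.1.2, t.1.2, t.2)) s); split.
  by move=> t /mapP [t' Ht' ->]; exact: (Hg t' Ht').
move=> w; rewrite big_map /=.
have -> : (mono v w - mono u w = - (mono u w - mono v w))%R by rewrite GRing.opprB.
rewrite Hs -GRing.sumrN; apply: eq_bigr => t _; by rewrite GRing.mulNr.
Qed.

Lemma eqv_trans disp (P : finPOrderType disp) (u v x : seq P) :
  eqv u v -> eqv v x -> eqv u x.
Proof.
case=> s1 [Hg1 Hs1]; case=> s2 [Hg2 Hs2].
exists (s1 ++ s2); split.
  by move=> t; rewrite mem_cat => /orP [/Hg1|/Hg2].
move=> w; rewrite big_cat /= -Hs1 -Hs2.
by rewrite GRing.addrA GRing.subrK.
Qed.

Lemma eqv_ctx disp (P : finPOrderType disp) (g : seq P -> seq P)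
  (C : pred (seq P)) (f : seq P -> seq P) (hx hy : seq P -> seq P) :
  (forall u w, mono (g u) w = if C w then mono u (f w) else 0%R) ->
  (forall tx l ty, g (tx ++ l ++ ty) = hx tx ++ l ++ hy ty) ->
  forall u v, eqv u v -> eqv (g u) (g v).
Proof.
move=> Hm Hc u v [s [Hg Hs]].
exists (map (fun t : int * seq P * seq P * seq P * seq P =>
   (t.1.1.1.1, hx t.1.1.1.2, t.1.1.2, t.1.2, hy t.2)) s); split.
  by move=> t /mapP [t' Ht' ->]; exact: (Hg t' Ht').
move=> w; rewrite big_map /=.
under eq_bigr => t _ do rewrite -!Hc !Hm.
rewrite !Hm; case: (C w) => /=; first by rewrite Hs.
rewrite big1 // => t _. by rewrite subrr mulr0.
Qed.

Lemma mono_left disp (P : finPOrderType disp) (x u w : seq P) :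
  mono (x ++ u) w = if take (size x) w == x then mono u (drop (size x) w) else 0%R.
Proof.
rewrite /mono; case: eqP => [->|Hne].
  by rewrite take_size_cat // eqxx drop_size_cat // eqxx.
case: eqP => // Ht; case: eqP => // Hd; exfalso; apply: Hne.
by rewrite -(cat_take_drop (size x) w) Ht Hd.
Qed.

Lemma mono_rev disp (P : finPOrderType disp) (v w : seq P) :
  mono v w = mono (rev v) (rev w).
Proof. by rewrite /mono (inj_eq (can_inj (@revK _))). Qed.

Lemma eqv_left disp (P : finPOrderType disp) (x u v : seq P) :
  eqv u v -> eqv (x ++ u) (x ++ v).
Proof.
apply: (@eqv_ctx _ _ (fun u => x ++ u) (fun w => take (size x) w == x)
   (drop (size x)) (fun t => x ++ t) id).
  by move=> u' w; rewrite mono_left.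
by move=> tx l ty; rewrite catA.
Qed.

Lemma eqv_right disp (P : finPOrderType disp) (y u v : seq P) :
  eqv u v -> eqv (u ++ y) (v ++ y).
Proof.
apply: (@eqv_ctx _ _ (fun u => u ++ y) (fun w => take (size (rev y)) (rev w) == rev y)
   (fun w => rev (drop (size (rev y)) (rev w))) id (fun t => t ++ y)).
  move=> u' w; rewrite mono_rev rev_cat mono_left; case: ifP => // _.
  by rewrite mono_rev revK.
by move=> tx l ty; rewrite -!catA.
Qed.

Lemma eqv_gen disp (P : finPOrderType disp) (x l r y : seq P) :
  plac_gen l r -> eqv (x ++ l ++ y) (x ++ r ++ y).
Proof.
move=> H; apply: eqv_left; apply: eqv_right.
exists [:: (1%R, [::], l, r, [::])]; split.
  by move=> t; rewrite inE => /eqP ->.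
by move=> w; rewrite big_seq1 /= GRing.mul1r !cats0.
Qed.

Lemma rel1 disp (P : finPOrderType disp) (x y : seq P) (p q r : P) :
  q < p -> ~~ (r < p) -> q < r -> eqv (x ++ [:: p; q; r] ++ y) (x ++ [:: p; r; q] ++ y).
Proof. move=> h1 h2 h3; apply: eqv_gen; exists q, p, r; left; by split. Qed.

Lemma rel2 disp (P : finPOrderType disp) (x y : seq P) (c a b : P) :
  ~~ (b < a) -> b < c -> a < c -> eqv (x ++ [:: c; a; b] ++ y) (x ++ [:: a; c; b] ++ y).
Proof. move=> h1 h2 h3; apply: eqv_gen; exists a, b, c; right; left; by split. Qed.

Lemma rel3 disp (P : finPOrderType disp) (x y : seq P) (c a b : P) :
  simP a b -> simP b c -> a < c -> eqv (x ++ [:: c; a; b] ++ y) (x ++ [:: b; c; a] ++ y).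
Proof. move=> h1 h2 h3; apply: eqv_gen; exists a, b, c; right; right; by split. Qed.

Lemma wd_S disp (P : finPOrderType disp) (a : nat -> P) m :
  word_dec a m.+1 = a m.+1 :: word_dec a m.
Proof. by rewrite /word_dec -[m.+1]addn1 iotaD rev_cat /= addnC. Qed.

Lemma low disp (P : finPOrderType disp) (a : nat -> P) (bk : P) m :
  (forall j, (1 <= j <= m)%N -> [/\ a j < a j.+1, ~~ (bk < a j.+1) & a j < bk]) ->
  eqv (word_dec a m.+1 ++ [:: bk]) (a m.+1 :: bk :: word_dec a m).
Proof.
elim: m => [|m IH] H; first by apply: eqv_refl.
rewrite wd_S.
apply: (@eqv_trans _ _ _ (a m.+2 :: a m.+1 :: bk :: word_dec a m)).
  apply: (@eqv_left _ _ [:: a m.+2]); apply: IH => j hj; apply: H; lia.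
have [h1 h2 h3] := H m.+1 (ltac:(lia)).
rewrite wd_S.
exact: (@rel1 _ _ [::] (word_dec a m) (a m.+2) (a m.+1) bk).
Qed.

Lemma high disp (P : finPOrderType disp) (a : nat -> P) (bk : P) k N :
  eqv (word_dec a k ++ [:: bk]) (bk :: word_dec a k) -> (1 <= k)%N ->
  (forall m, (k <= m < N)%N -> [/\ ~~ (a m < bk), a m < a m.+1 & bk < a m.+1]) ->
  forall m, (k <= m <= N)%N -> eqv (word_dec a m ++ [:: bk]) (bk :: word_dec a m).
Proof.
move=> Hk k1 H; elim=> [|m IH] hm; first lia.
have [km|km] : (k = m.+1 \/ k <= m)%N by lia.
  by rewrite -km.
rewrite wd_S.
apply: (@eqv_trans _ _ _ (a m.+1 :: bk :: word_dec a m)).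
  apply: (@eqv_left _ _ [:: a m.+1]); apply: IH; lia.
have [h1 h2 h3] := H m (ltac:(lia)).
case: m IH hm km h1 h2 h3 => [|m] IH hm km h1 h2 h3; first lia.
rewrite wd_S.
exact: (@rel2 _ _ [::] (word_dec a m) (a m.+2) bk (a m.+1)).
Qed.

Lemma simPC disp (P : finPOrderType disp) (x y : P) : simP x y = simP y x.
Proof. by rewrite /simP andbC. Qed.

Theorem mainTheorem15 (disp : Order.disp_t) (P : finPOrderType disp)
  (n : nat) (a b : nat -> P) :
  three_one_free (P := P) ->
  (* a = a_(n+1) ... a_1 and b = b_n ... b_1 are P-strictly decreasing *)
  (forall i, (1 <= i <= n)%N -> a i < a i.+1) ->
  (forall i, (1 <= i < n)%N -> b i < b i.+1) ->
  (forall i, (1 <= i <= n)%N -> simP (a i) (b i)) ->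
  (forall i, (1 <= i <= n)%N -> simP (a i.+1) (b i)) ->
  (forall i, (1 <= i <= n.-1)%N -> a i < b i.+1) ->
  (forall i, (1 <= i <= n.-1)%N -> b i < a i.+2) ->
  plac_equiv (mono (word_dec a n.+1 ++ word_dec b n))
             (mono (word_dec b n ++ word_dec a n.+1)).
Proof.
move=> _ Ha Hb Hab Hab2 H3 H4.
have amono : forall i j, (1 <= i <= j)%N -> (j <= n.+1)%N -> a i <= a j.
  move=> i j /andP [i1 ij] jn; rewrite -(subnKC ij).
  have : (i + (j - i) <= n.+1)%N by rewrite subnKC.
  elim: (j - i) => [|d IH] h; first by rewrite addn0.
  apply: le_trans (IH ltac:(lia)) _; rewrite addnS; apply: ltW; apply: Ha; lia.
have letter : forall k, (1 <= k <= n)%N ->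
    eqv (word_dec a n.+1 ++ [:: b k]) (b k :: word_dec a n.+1).
  move=> K hK.
  have hs := Hab2 K hK; rewrite /simP in hs; case/andP: hs => hs1 hs2.
  have Hl : eqv (word_dec a K ++ [:: b K]) (a K :: b K :: word_dec a K.-1).
    case: K hK hs1 hs2 => [|k] hK hs1 hs2; first lia.
    apply: low => j hj; split.
    - apply: Ha; lia.
    - apply/negP => hc; move/negP: hs2; apply; apply: lt_le_trans hc _.
      apply: amono; lia.
    - apply: le_lt_trans (H3 k ltac:(lia)); apply: amono; lia.
  have Hm : eqv (word_dec a K.+1 ++ [:: b K]) (b K :: word_dec a K.+1).
    rewrite wd_S.
    apply: (@eqv_trans _ _ _ (a K.+1 :: a K :: b K :: word_dec a K.-1)).
      exact: (@eqv_left _ _ [:: a K.+1] _ _ Hl).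
    case: K hK hs1 hs2 Hl => [|k] hK hs1 hs2 Hl; first lia.
    rewrite wd_S.
    apply: (@rel3 _ _ [::] (word_dec a k) (a k.+2) (a k.+1) (b k.+1)).
    - exact: Hab.
    - by rewrite simPC; apply: Hab2.
    - apply: Ha; lia.
  apply: (@high _ _ a (b K) K.+1 n.+1 Hm ltac:(lia) _); last lia.
  move=> m hm; split.
  - apply/negP => hc; move/negP: hs1; apply; apply: le_lt_trans hc.
    apply: amono; lia.
  - apply: Ha; lia.
  - apply: lt_le_trans (H4 K ltac:(lia)) _; apply: amono; lia.
suff : forall k, (k <= n)%N ->
    eqv (word_dec a n.+1 ++ word_dec b k) (word_dec b k ++ word_dec a n.+1).
  by apply.
elim=> [|k IH] hk; first by rewrite /= cats0; apply: eqv_refl.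
rewrite (@wd_S _ _ b k).
apply: (@eqv_trans _ _ _ ((b k.+1 :: word_dec a n.+1) ++ word_dec b k)).
  rewrite (_ : word_dec a n.+1 ++ b k.+1 :: word_dec b k = (word_dec a n.+1 ++ [:: b k.+1]) ++ word_dec b k); last by rewrite -catA.
  apply: eqv_right; apply: letter; lia.
exact: (@eqv_left _ _ [:: b k.+1] _ _ (IH ltac:(lia))).
Qed.
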